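(* Let $(\mathbf{x}_i,y_i)_{i=1}^n\subset\mathbb{R}^d\times\{\pm1\}$ satisfy $\|\mathbf{x}_i\|\le 1$ for all $i$, and suppose there are $\gamma>0$ and a unit vector $\mathbf{w}_*$ with $y_i\mathbf{x}_i^\top\mathbf{w}_*\ge\gamma$ for all $i$. Let $L(\mathbf{w})=\frac1n\sum_{i=1}^n\ln\big(1+\exp(-y_i\mathbf{x}_i^\top\mathbf{w})\big)$ and run gradient descent $\mathbf{w}_t=\mathbf{w}_{t-1}-\eta\nabla L(\mathbf{w}_{t-1})$, $t\ge1$, with an arbitrary constant stepsize $\eta>0$ and $\mathbf{w}_0=0$. Let $F(\mathbf{w}):=\frac1n\sum_{i=1}^n\exp(-y_i\mathbf{x}_i^\top\mathbf{w})$. Then: (1) For every integer $t\ge1$, \[\frac1t\sum_{k=0}^{t-1}L(\mathbf{w}_k)\le\frac{1+\ln^2(\gamma^2\eta t)+\eta^2/4}{\gamma^2\eta t}.\] (2) If $s\ge0$ is such that $L(\mathbf{w}_s)\le 1/\eta$, then $(L(\mathbf{w}_t))_{t\ge s}$ is non-increasing, and for every $t>s$, \[L(\mathbf{w}_t)\le\frac{2F(\mathbf{w}_s)+\ln^2(\gamma^2\eta(t-s))}{\gamma^2\eta(t-s)}.\] (3) Let $\tau:=\frac{60}{\gamma^2}\max\Big\{\eta,\ n,\ e,\ \frac{\eta+n}{\eta}\ln\frac{\eta+n}{\eta}\Big\}$. Then there exists an integer $0\le s\le\tau$ such that $L(\mathbf{w}_s)\le1/\eta$ and $F(\mathbf{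w}_s)\le1$.
   Context: Logistic regression with linearly separable data; $\eta$ may be arbitrarily large (no smoothness-based restriction on the stepsize). *)

(* Defs.v *)
From HB Require Import structures.
From mathcomp Require Import all_boot all_order all_algebra.
From mathcomp Require Import all_classical all_reals.
From mathcomp Require Import all_analysis.
Set Implicit Arguments. Unset Strict Implicit. Unset Printing Implicit Defensive.
Import Order.TTheory GRing.Theory Num.Theory.
Local Open Scope ring_scope.

Section Logistic.
Variables (R : realType) (d n : nat).
Variables (x : 'I_n -> 'rV[R]_d) (y : 'I_n -> R).

Definition dotv (u v : 'rV[R]_d) : R := \sum_(j < d) u 0 j * v 0 j.
Definition norm2 (u : 'rV[R]_d) : R := Num.sqrt (dotv u u).

Definition margin (w : 'rV[R]_d) (i : 'I_n) : R := y i * dotv (x i) w.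

Definition logistic_loss (w : 'rV[R]_d) : R :=
  n%:R^-1 * \sum_(i < n) ln (1 + expR (- margin w i)).

Definition exp_loss (w : 'rV[R]_d) : R :=
  n%:R^-1 * \sum_(i < n) expR (- margin w i).

Definition logistic_grad (w : 'rV[R]_d) : 'rV[R]_d :=
  - (n%:R^-1 *: \sum_(i < n) ((y i / (1 + expR (margin w i))) *: x i)).

Fixpoint gd (eta : R) (t : nat) : 'rV[R]_d :=
  match t with
  | O => 0
  | t'.+1 => gd eta t' - eta *: logistic_grad (gd eta t')
  end.

End Logistic.

(* Main.v *)
Require Import Defs.
From HB Require Import structures.
From mathcomp Require Import all_boot all_order all_algebra.
From mathcomp Require Import all_classical all_reals.
From mathcomp Require Import all_analysis.
Import Order.TTheory GRing.Theory Num.Theory.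
Local Open Scope ring_scope.
From mathcomp Require Import ring lra.
Import Order.TTheory GRing.Theory Num.Theory.
Local Open Scope ring_scope.
Set Implicit Arguments. Unset Strict Implicit. Unset Printing Implicit Defensive.

Section OneD. Variable R : realType.
Implicit Types a b z h : R.
Definition ell z : R := ln (1 + expR (- z)).
Definition pr z : R := (1 + expR z)^-1.

Lemma pr_gt0 z : 0 < pr z.
Proof. by rewrite /pr invr_gt0; have := expR_gt0 z; lra. Qed.
Lemma pr_le1 z : pr z <= 1.
Proof. rewrite /pr invf_le1 //; have := expR_gt0 z; lra. Qed.

Lemma prE z : pr z = expR (- z) / (1 + expR (- z)).
Proof.
rewrite /pr expRN; have := expR_gt0 z => h.
field; apply/andP; split; rewrite ?lt0r_neq0 //; lra.
Qed.

Lemma ell_le_exp z : ell z <= expR (- z).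
Proof. by rewrite /ell le_ln1Dx //; have := expR_gt0 (- z); lra. Qed.

Lemma ell_ge0 z : 0 <= ell z.
Proof. by rewrite /ell ln_ge0 //; have := expR_gt0 (- z); lra. Qed.

Lemma pr_le_ell z : pr z <= ell z.
Proof.
have he := expR_gt0 (- z).
set u := expR (- z) in he *.
have hp : pr z = u / (1 + u) by rewrite prE.
have h1 : ln (1 - u / (1 + u)) <= - (u / (1 + u)).
  apply: le_ln1Dx.
  have : u / (1 + u) < 1 by rewrite ltr_pdivrMr; lra.
  lra.
have h2 : 1 - u / (1 + u) = (1 + u)^-1 by field; lra.
rewrite h2 lnV ?posrE in h1; last lra.
by rewrite hp /ell -/u; lra.
Qed.

Lemma expR_convex_aux p h : 0 <= p <= 1 -> expR (p * h) <= (1 - p) + p * expR h.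
Proof.
move=> /andP [p0 p1].
have e1 := expR_ge1Dx (- (p * h)).
have e2 := expR_ge1Dx ((1 - p) * h).
have key : 1 <= (1 - p) * expR (- (p * h)) + p * expR ((1 - p) * h).
  have : (1 - p) * (1 + - (p * h)) <= (1 - p) * expR (- (p * h)).
    by rewrite ler_wpM2l //; lra.
  have : p * (1 + (1 - p) * h) <= p * expR ((1 - p) * h).
    by rewrite ler_wpM2l.
  nra.
have hp := expR_gt0 (p * h).
rewrite -(ler_pM2l hp) mulr1 in key.
apply: (le_trans key); rewrite le_eqVlt; apply/orP; left; apply/eqP.
have eh : expR h = expR (p * h) * expR ((1 - p) * h).
  by rewrite -expRD; congr expR; ring.
by rewrite eh expRN; field; rewrite lt0r_neq0.
Qed.

Lemma ell_convex a b : pr a * (a - b) <= ell b - ell a.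
Proof.
set p := pr a.
have hp0 : 0 <= p by apply/ltW/pr_gt0.
have hp1 : p <= 1 by apply: pr_le1.
have hc := @expR_convex_aux p (a - b) (introT andP (conj hp0 hp1)).
have ea := expR_gt0 a.
have hid : (1 + expR (- a)) * ((1 - p) + p * expR (a - b)) = 1 + expR (- b).
  rewrite /p /pr expRB !expRN; field.
  by repeat (apply/andP; split); apply: lt0r_neq0; rewrite ?expR_gt0 //; lra.
have hpos : 0 < (1 - p) + p * expR (a - b).
  by apply: (lt_le_trans (expR_gt0 _) hc).
have h1 : 0 < 1 + expR (- a) by have := expR_gt0 (- a); lra.
have : ln (expR (p * (a - b))) <= ln ((1 - p) + p * expR (a - b)).
  by rewrite ler_ln ?posrE // expR_gt0.
rewrite expRK => h2.
rewrite /ell -hid lnM ?posrE //; lra.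
Qed.

Lemma der_aux (t : R) : is_derive t 1 (fun u : R => expR u * (1 - u + u ^+ 2)) (expR t * (t ^+ 2 + t)).
Proof.
apply: is_derive_eq.
rewrite /GRing.scale /=. ring.
Qed.
Lemma expR_le_quad (z : R) : z <= 1 -> expR z <= 1 + z + z ^+ 2.
Proof.
move=> z1.
have [z0|z0] := lerP z 0.
  have h1 := expR_ge1Dx (- z).
  rewrite expRN in h1.
  have hz : 0 < 1 - z by lra.
  have he := expR_gt0 z.
  have h2 : expR z * (1 - z) <= 1.
    by rewrite -[X in _ <= X](mulfV (lt0r_neq0 he)) ler_pM2l.
  rewrite -(@ler_pM2r _ (1 - z)) //.
  apply: (le_trans h2); rewrite -subr_ge0.
  have -> : (1 + z + z ^+ 2) * (1 - z) - 1 = - (z * z ^+ 2) by ring.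
  by rewrite oppr_ge0 mulr_le0_ge0 // sqr_ge0.
set f := fun u : R => expR u * (1 - u + u ^+ 2).
have key : f 0 <= f (- z).
  apply: (@ler0_derive1_nincr _ f (-1) 0).
  - by move=> u _; apply: ex_derive; apply: der_aux.
  - move=> u; rewrite in_itv /= => /andP [a b].
    rewrite derive1E (@derive_val _ _ _ _ _ _ _ (der_aux u)).
    rewrite mulr_ge0_le0 // ?expR_ge0 //.
    rewrite (_ : u ^+ 2 + u = u * (u + 1)); last by ring.
    by rewrite mulr_le0_ge0 //; lra.
  - apply: derivable_within_continuous => u _.
    by apply: ex_derive; apply: der_aux.
  - lra.
  - lra.
  - lra.
rewrite /f /= expR0 in key.
have key' : 1 <= expR (- z) * (1 + z + z ^+ 2).
  move: key; rewrite (_ : 1 - - z + (- z) ^+ 2 = 1 + z + z ^+ 2); last by ring.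
  by rewrite subr0 expr0n /= addr0 mulr1.
have he := expR_gt0 z.
have hN : expR z * expR (- z) = 1 by rewrite -expRD addrN expR0.
rewrite -(ler_pM2l he) in key'.
by rewrite mulr1 mulrA hN mul1r in key'.
Qed.

Lemma ell_descent a e : - e <= 1 -> ell (a + e) <= ell a - pr a * e + pr a * e ^+ 2.
Proof.
move=> he.
set p := pr a.
have hp0 : 0 < p by apply/pr_gt0.
have hp1 : p <= 1 by apply: pr_le1.
have ea := expR_gt0 a.
have hid : (1 + expR (- a)) * (1 + p * (expR (- e) - 1)) = 1 + expR (- (a + e)).
  rewrite /p /pr opprD expRD !expRN; field.
  by repeat (apply/andP; split); apply: lt0r_neq0; rewrite ?expR_gt0 //; lra.
have hq := @expR_le_quad (- e) he.
have hE := expR_gt0 (- e).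
have hpos : -1 < p * (expR (- e) - 1).
  have : p * (expR (- e) - 1) >= p * (0 - 1) by rewrite ler_wpM2l //; lra.
  nra.
have h1 : 0 < 1 + expR (- a) by have := expR_gt0 (- a); lra.
have h2 := le_ln1Dx hpos.
have : p * (expR (- e) - 1) <= p * (- e + e ^+ 2).
  by rewrite ler_wpM2l //; [lra | rewrite sqrrN in hq; lra].
rewrite /ell -hid lnM ?posrE //; try lra.
Qed.

Lemma pr_half z : pr z <= 2^-1 -> 0 <= z.
Proof.
rewrite /pr => h.
have ez := expR_gt0 z.
rewrite lef_pV2 ?posrE in h; try lra.
rewrite leNgt; apply/negP => hz.
have := hz; rewrite -expR_lt1 => h1; lra.
Qed.

Lemma ell_le_2pr z : 0 <= z -> ell z <= 2 * pr z.
Proof.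
move=> z0; apply: (le_trans (ell_le_exp z)).
rewrite prE.
have hu := expR_gt0 (- z).
have : expR (- z) <= 1 by rewrite expR_le1; lra.
move=> hu1.
rewrite mulrA ler_pdivlMr; try lra.
nra.
Qed.
End OneD.

Section Dot. Variables (R : realType) (d : nat).
Implicit Types u v w : 'rV[R]_d.
Lemma dotvC u v : dotv u v = dotv v u.
Proof. by apply: eq_bigr => j _; rewrite mulrC. Qed.
Lemma dotvDl u v w : dotv (u + v) w = dotv u w + dotv v w.
Proof. by rewrite /dotv -big_split; apply: eq_bigr => j _; rewrite !mxE mulrDl. Qed.
Lemma dotvZl a u w : dotv (a *: u) w = a * dotv u w.
Proof. by rewrite /dotv mulr_sumr; apply: eq_bigr => j _; rewrite !mxE mulrA. Qed.
Lemma dotvNl u w : dotv (- u) w = - dotv u w.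
Proof. by rewrite -scaleN1r dotvZl mulN1r. Qed.
Lemma dotvBl u v w : dotv (u - v) w = dotv u w - dotv v w.
Proof. by rewrite dotvDl dotvNl. Qed.
Lemma dotv0l w : dotv 0 w = 0.
Proof. by rewrite /dotv big1 // => j _; rewrite mxE mul0r. Qed.
Lemma dotv_suml I (r : seq I) (P : pred I) (f : I -> 'rV[R]_d) w :
  dotv (\sum_(i <- r | P i) f i) w = \sum_(i <- r | P i) dotv (f i) w.
Proof.
elim/big_rec2: _ => [|i a b _ <-]; first by rewrite dotv0l.
by rewrite dotvDl.
Qed.
Lemma dotvDr u v w : dotv w (u + v) = dotv w u + dotv w v.
Proof. by rewrite !(dotvC w) dotvDl. Qed.
Lemma dotvZr a u w : dotv w (a *: u) = a * dotv w u.
Proof. by rewrite !(dotvC w) dotvZl. Qed.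
Lemma dotvNr u w : dotv w (- u) = - dotv w u.
Proof. by rewrite !(dotvC w) dotvNl. Qed.
Lemma dotvBr u v w : dotv w (u - v) = dotv w u - dotv w v.
Proof. by rewrite !(dotvC w) dotvBl. Qed.
Lemma dotv0r w : dotv w 0 = 0.
Proof. by rewrite dotvC dotv0l. Qed.
Lemma dotv_ge0 u : 0 <= dotv u u.
Proof. by rewrite /dotv sumr_ge0 // => j _; rewrite -expr2 sqr_ge0. Qed.
Lemma dotv_sq u v : dotv (u + v) (u + v) = dotv u u + 2 * dotv u v + dotv v v.
Proof. rewrite !dotvDl !dotvDr (dotvC v u); ring. Qed.

Lemma dotv_eq0 u : dotv u u = 0 -> u = 0.
Proof.
move=> h; apply/rowP => j; rewrite mxE.
have := h; rewrite /dotv => /eqP; rewrite psumr_eq0; last first.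
  by move=> k _; rewrite -expr2 sqr_ge0.
move=> /allP /(_ j (mem_index_enum _)) /implyP /(_ isT) /eqP.
by move/eqP; rewrite mulf_eq0 orbb => /eqP.
Qed.

Lemma cauchy_schwarz u v : dotv u v ^+ 2 <= dotv u u * dotv v v.
Proof.
set D := dotv v v; set b := dotv u v; set A := dotv u u.
have hD : 0 <= D by apply: dotv_ge0.
have [D0|Dpos] := eqVneq D 0.
  have v0 := @dotv_eq0 v D0.
  by rewrite /b v0 dotv0r D0 expr0n mulr0.
have Dp : 0 < D by rewrite lt0r Dpos.
have h := dotv_ge0 (D *: u - b *: v).
have e : dotv (D *: u - b *: v) (D *: u - b *: v) = D * (D * A - b ^+ 2).
  rewrite !dotvBl !dotvBr !dotvZl !dotvZr -/A -/D -/b (dotvC v u) -/b; ring.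
rewrite e pmulr_rge0 // in h; lra.
Qed.
End Dot.

Section Num3.
Variable R : realType.

Lemma e_ge : 9 / 4 <= expR 1 :> R.
Proof.
have h := expR_ge1Dx (2^-1 : R).
have e : expR 1 = expR (2^-1) * expR (2^-1) :> R.
  by rewrite -expRD; congr expR; field.
rewrite e.
have h0 : 0 <= 1 + 2^-1 :> R by lra.
have := ler_pM h0 h0 h h.
lra.
Qed.

Lemma lnE1 : ln (expR 1) = 1 :> R.
Proof. by rewrite expRK. Qed.

Lemma N_le_etaM (eta nn M : R) : 0 < eta -> 0 <= nn -> expR 1 <= M ->
  (eta + nn) / eta * ln ((eta + nn) / eta) <= M -> eta + nn <= eta * M.
Proof.
move=> he hn hM hr.
set r := (eta + nn) / eta in hr.
have r1 : 1 <= r by rewrite /r ler_pdivlMr // mul1r; lra.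
have eN : eta + nn = eta * r by rewrite /r; field; rewrite lt0r_neq0.
rewrite eN ler_pM2l //.
have [re|re] := lerP (expR 1) r.
  have : 1 <= ln r by rewrite -lnE1 ler_ln ?posrE ?expR_gt0 //; lra.
  move=> hl; apply: le_trans hr; rewrite -[X in X <= _]mulr1 ler_wpM2l //; lra.
lra.
Qed.

Lemma num3 (eta nn M A : R) : 0 < eta -> 0 <= nn -> eta <= M -> nn <= M -> expR 1 <= M ->
  (eta + nn) / eta * ln ((eta + nn) / eta) <= M -> 30 * eta * M <= A ->
  8 * (eta + nn) * ln (1 + 16 * (eta + nn) ^+ 2 / A) + 4 * (eta + nn) * eta <= A.
Proof.
move=> he hn h1 h2 h3 h4 hA.
set N := eta + nn.
set r := N / eta.
have r1 : 1 <= r by rewrite /r ler_pdivlMr // mul1r /N; lra.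
have eN : N = eta * r by rewrite /r; field; rewrite lt0r_neq0.
have hNM := N_le_etaM he hn h3 h4; rewrite -/N in hNM.
have Mpos : 0 < M by have := expR_gt0 (1 : R); lra.
have Apos : 0 < A by have := mulr_gt0 (mulr_gt0 (ltr0n _ 30) he) Mpos; lra.
have Npos : 0 < N by rewrite /N; lra.
have e94 := e_ge.
have k1 : 16 * N ^+ 2 / A <= 16 / 15 * r.
  rewrite ler_pdivrMr // eN.
  have : 15 * eta * N <= A.
    have : N <= 2 * M by rewrite /N; lra.
    move=> hN2; apply: le_trans hA.
    have := ler_wpM2l (ltW he) hN2; nra.
  rewrite eN => hh.
  have hr0 : 0 <= r by lra.
  have := ler_wpM2l hr0 hh; nra.
have k2 : 1 + 16 * N ^+ 2 / A <= expR 1 * r.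
  have : 9 / 4 * r <= expR 1 * r by rewrite ler_wpM2r //; lra.
  lra.
have k3 : ln (1 + 16 * N ^+ 2 / A) <= 1 + ln r.
  have hpos : 0 < 1 + 16 * N ^+ 2 / A.
    have : 0 <= 16 * N ^+ 2 / A by rewrite divr_ge0 // ?mulr_ge0 ?sqr_ge0 // ltW.
    lra.
  have := k2; rewrite -(ler_ln (x:=1 + 16 * N ^+ 2 / A)) ?posrE //; last first.
    by rewrite mulr_gt0 ?expR_gt0 //; lra.
  by rewrite lnM ?posrE ?expR_gt0 // ?lnE1 //; lra.
have k4 : 8 * N * ln (1 + 16 * N ^+ 2 / A) <= 8 * N + 8 * N * ln r.
  have := ler_wpM2l (ltW (mulr_gt0 (ltr0n _ 8) Npos)) k3; lra.
have k5 : N * ln r = eta * (r * ln r) by rewrite {1}eN; ring.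
have k6 : eta * (r * ln r) <= eta * M by rewrite ler_pM2l.
have k7 : N * eta <= 2 * M * eta.
  by rewrite ler_pM2r // /N; lra.
nra.
Qed.
End Num3.

Unset Implicit Arguments. Set Strict Implicit.
Section Log.
Variables (R : realType) (d n : nat) (x : 'I_n -> 'rV[R]_d) (y : 'I_n -> R).
Hypothesis hn : (0 < n)%N.
Hypothesis hy : forall i, y i = 1 \/ y i = -1.
Hypothesis hx : forall i, norm2 (x i) <= 1.

Local Notation m := (margin x y).
Local Notation L := (logistic_loss x y).
Local Notation F := (exp_loss x y).

Definition V (w : 'rV[R]_d) : 'rV[R]_d :=
  n%:R^-1 *: \sum_(i < n) (y i / (1 + expR (m w i))) *: x i.
Definition G (w : 'rV[R]_d) : R := n%:R^-1 * \sum_(i < n) pr (m w i).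

Lemma gdS eta t : gd x y eta t.+1 = gd x y eta t + eta *: V (gd x y eta t).
Proof. by rewrite /= /logistic_grad scalerN opprK. Qed.

Lemma gd0 eta : gd x y eta 0 = 0. Proof. by []. Qed.

Lemma LE w : L w = n%:R^-1 * \sum_(i < n) ell (m w i).
Proof. by []. Qed.

Lemma ninv_gt0 : 0 < n%:R^-1 :> R.
Proof. by rewrite invr_gt0 ltr0n. Qed.

Lemma y_sq i : y i ^+ 2 = 1.
Proof. by case: (hy i) => ->; rewrite ?sqrrN expr1n. Qed.
Lemma y_abs i : `|y i| = 1.
Proof. by case: (hy i) => ->; rewrite ?normrN normr1. Qed.

Lemma dxx i : dotv (x i) (x i) <= 1.
Proof.
have := hx i; rewrite /norm2 -{1}sqrtr1 ler_sqrt //.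
Qed.

Lemma dxy_abs i j : `|dotv (x i) (x j)| <= 1.
Proof.
have h := cauchy_schwarz (x i) (x j).
have h1 := dxx i; have h2 := dxx j.
have h3 := dotv_ge0 (x i); have h4 := dotv_ge0 (x j).
have : dotv (x i) (x j) ^+ 2 <= 1.
  apply: (le_trans h); rewrite -[1](mulr1 1); apply: ler_pM => //.
rewrite -[X in _ <= X](expr1n _ 2) -real_normK ?num_real // => hh.
have := normr_ge0 (dotv (x i) (x j)); move: hh; rewrite expr1n; nra.
Qed.

Lemma dotV w z : dotv (V w) z = n%:R^-1 * \sum_(i < n) pr (m w i) * (y i * dotv (x i) z).
Proof.
rewrite /V dotvZl dotv_suml; congr (_ * _); apply: eq_bigr => i _.
by rewrite dotvZl /pr mulrA (mulrC _ (y i)).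
Qed.

Lemma marginD w z i : m (w + z) i = m w i + y i * dotv (x i) z.
Proof. by rewrite /margin dotvDr mulrDr. Qed.
Lemma marginZ a z i : m (a *: z) i = a * (y i * dotv (x i) z).
Proof. by rewrite /margin dotvZr mulrCA. Qed.

Lemma G_ge0 w : 0 <= G w.
Proof. by rewrite /G mulr_ge0 ?invr_ge0 ?ler0n // sumr_ge0 // => i _; apply/ltW/pr_gt0. Qed.

Lemma G_le1 w : G w <= 1.
Proof.
rewrite /G; have hn' : 0 < n%:R :> R by rewrite ltr0n.
rewrite ler_pdivrMl //  mulr1.
have -> : n%:R = \sum_(i < n) (1 : R) by rewrite sumr_const card_ord.
by apply: ler_sum => i _; apply: pr_le1.
Qed.

Lemma G_le_L w : G w <= L w.
Proof.
rewrite /G LE ler_pM2l ?ninv_gt0 //; apply: ler_sum => i _; apply: pr_le_ell.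
Qed.

Lemma L_le_F w : L w <= F w.
Proof.
rewrite LE /exp_loss ler_pM2l ?ninv_gt0 //; apply: ler_sum => i _; apply: ell_le_exp.
Qed.

Lemma L_ge0 w : 0 <= L w.
Proof. by rewrite LE mulr_ge0 ?invr_ge0 ?ler0n // sumr_ge0 // => i _; apply: ell_ge0. Qed.

Lemma pr_ge0' z : 0 <= pr z :> R.
Proof. exact: ltW (pr_gt0 _). Qed.

Lemma absyxV w i : `|y i * dotv (x i) (V w)| <= G w.
Proof.
rewrite normrM y_abs mul1r dotvC dotV normrM ger0_norm ?invr_ge0 ?ler0n //.
rewrite /G ler_pM2l ?ninv_gt0 //.
apply: (le_trans (ler_norm_sum _ _ _)); apply: ler_sum => j _.
rewrite normrM (ger0_norm (pr_ge0' _)).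
rewrite -[X in _ <= X]mulr1 ler_wpM2l ?pr_ge0' //.
by rewrite normrM y_abs mul1r dxy_abs.
Qed.

Lemma VV_le w : dotv (V w) (V w) <= G w ^+ 2.
Proof.
rewrite {1}dotV expr2 {2}/G mulrA (mulrC _ n%:R^-1) -mulrA ler_pM2l ?ninv_gt0 //.
rewrite mulr_sumr; apply: ler_sum => i _.
rewrite mulrC ler_wpM2r ?pr_ge0' //.
by apply: le_trans (absyxV w i); apply: ler_norm.
Qed.

Lemma Vconv w u : dotv (V w) (w - u) <= L u - L w.
Proof.
rewrite dotV !LE -mulrBr ler_pM2l ?ninv_gt0 // -sumrB; apply: ler_sum => i _.
by rewrite dotvBr mulrBr; apply: ell_convex.
Qed.

Lemma descent w eta : 0 < eta -> eta * L w <= 1 -> L (w + eta *: V w) <= L w.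
Proof.
move=> he hL.
set vv := dotv (V w) (V w).
have hG := G_le_L w; have hG0 := G_ge0 w.
have heG : eta * G w <= 1 by apply: le_trans hL; rewrite ler_wpM2l // ltW.
have hvv : 0 <= vv by apply: dotv_ge0.
have step : forall i, ell (m (w + eta *: V w) i) <=
    ell (m w i) - pr (m w i) * (eta * (y i * dotv (x i) (V w)))
      + pr (m w i) * (eta ^+ 2 * vv).
  move=> i; rewrite marginD dotvZr mulrCA.
  set del := eta * (y i * dotv (x i) (V w)).
  have hd : `|del| <= 1.
    rewrite /del normrM (ger0_norm (ltW he)); apply: (le_trans _ heG).
    by rewrite ler_wpM2l ?(ltW he) // absyxV.
  have hd2 : del ^+ 2 <= eta ^+ 2 * vv.
    rewrite /del exprMn ler_wpM2l ?sqr_ge0 // exprMn y_sq mul1r.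
    apply: (le_trans (cauchy_schwarz _ _)).
    by rewrite -[X in _ <= X]mul1r ler_wpM2r // dxx.
  apply: (le_trans (ell_descent _ _)).
    by move: hd; rewrite ler_norml => /andP [h1 h2]; lra.
  by rewrite lerD2l ler_wpM2l // ltW // pr_gt0.
rewrite !LE.
have : \sum_(i < n) ell (m (w + eta *: V w) i) <=
       \sum_(i < n) ell (m w i) - eta * (n%:R * vv) + eta ^+ 2 * vv * (n%:R * G w).
  apply: le_trans; first by apply: ler_sum => i _; exact: step.
  rewrite big_split sumrB /=.
  have e1 : \sum_(i < n) pr (m w i) * (eta * (y i * dotv (x i) (V w))) = eta * (n%:R * vv).
    rewrite /vv dotV (mulrA n%:R) mulfV ?pnatr_eq0 -?lt0n // mul1r mulr_sumr.
    by apply: eq_bigr => i _; rewrite mulrCA.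
  have e2 : \sum_(i < n) pr (m w i) * (eta ^+ 2 * vv) = eta ^+ 2 * vv * (n%:R * G w).
    by rewrite /G (mulrA n%:R) mulfV ?pnatr_eq0 -?lt0n // mul1r -mulr_suml mulrC.
  by rewrite e1 e2.
move=> h.
rewrite ler_pM2l ?ninv_gt0 //; apply: (le_trans h).
have : eta ^+ 2 * vv * (n%:R * G w) <= eta * (n%:R * vv).
  have hn' : 0 <= n%:R :> R by rewrite ler0n.
  rewrite (_ : eta ^+ 2 * vv * (n%:R * G w) = (eta * (n%:R * vv)) * (eta * G w)); last by ring.
  by rewrite -[X in _ <= X]mulr1 ler_wpM2l // mulr_ge0 ?mulr_ge0 // ltW.
lra.
Qed.


Lemma Gsq_le w : G w ^+ 2 <= G w.
Proof. by rewrite expr2 -[X in _ <= X]mulr1 ler_wpM2l ?G_ge0 ?G_le1. Qed.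

Lemma step2 w eta u : 0 < eta -> eta * L w <= 1 ->
  dotv (w + eta *: V w - u) (w + eta *: V w - u) <=
  dotv (w - u) (w - u) + 2 * eta * L u - eta * L w.
Proof.
move=> he hL.
rewrite (_ : w + eta *: V w - u = (w - u) + eta *: V w); last by rewrite addrAC.
rewrite dotv_sq (dotvZr eta (V w) (w - u)) (dotvZl eta (V w)) (dotvZr eta (V w) (V w)) (dotvC (w - u) (V w)).
have h1 := Vconv w u.
have h2 := VV_le w.
have hG := G_le_L w; have hG0 := G_ge0 w.
have h3 : eta * G w <= 1 by apply: le_trans hL; rewrite ler_wpM2l // ltW.
have h4 : eta * (eta * dotv (V w) (V w)) <= eta * L w.
  have p1 : eta * eta * dotv (V w) (V w) <= eta * eta * G w ^+ 2.
    by rewrite ler_wpM2l // mulr_ge0 // ltW.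
  have p2 : (eta * G w) * (eta * G w) <= eta * G w.
    by rewrite -[X in _ <= X]mulr1 ler_wpM2l // mulr_ge0 // ltW.
  have p3 : eta * G w <= eta * L w by rewrite ler_wpM2l // ltW.
  rewrite expr2 in p1; lra.
have h6 : 2 * (eta * dotv (V w) (w - u)) <= 2 * eta * (L u - L w).
  by rewrite -mulrA ler_wpM2l // ler_wpM2l // ltW.
lra.
Qed.

Variables (gamma : R) (wstar : 'rV[R]_d).
Hypothesis hg : 0 < gamma.
Hypothesis hws : norm2 wstar = 1.
Hypothesis hmar : forall i, gamma <= y i * dotv (x i) wstar.

Lemma ws1 : dotv wstar wstar = 1.
Proof. by rewrite -(sqr_sqrtr (dotv_ge0 wstar)) -/(norm2 wstar) hws expr1n. Qed.

Lemma Vws w : gamma * G w <= dotv (V w) wstar.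
Proof.
rewrite dotV /G mulrCA ler_pM2l ?ninv_gt0 // mulr_sumr; apply: ler_sum => i _.
by rewrite mulrC ler_wpM2l ?pr_ge0'.
Qed.

Lemma L_shift w th : 0 <= th -> L (w + th *: wstar) <= expR (- (th * gamma)) * F w.
Proof.
move=> hth.
rewrite LE /exp_loss mulrCA ler_pM2l ?ninv_gt0 // mulr_sumr; apply: ler_sum => i _.
apply: (le_trans (ell_le_exp _)); rewrite marginD dotvZr mulrCA -expRD ler_expR.
have := hmar i; have : th * gamma <= th * (y i * dotv (x i) wstar) by rewrite ler_wpM2l.
lra.
Qed.

Lemma F0 : F 0 = 1.
Proof.
rewrite /exp_loss (eq_bigr (fun _ => 1)); last first.
  by move=> i _; rewrite /margin dotv0r mulr0 oppr0 expR0.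
by rewrite sumr_const card_ord mulVf // pnatr_eq0 -lt0n.
Qed.

Lemma L_theta th : 0 <= th -> L (th *: wstar) <= expR (- (th * gamma)).
Proof.
move=> hth; have := @L_shift 0 th hth; rewrite add0r F0 mulr1 //.
Qed.

Lemma step1 w eta th c : 0 < eta -> c = th + eta / (2 * gamma) ->
  dotv (w + eta *: V w - c *: wstar) (w + eta *: V w - c *: wstar) <=
  dotv (w - c *: wstar) (w - c *: wstar) + 2 * eta * (L (th *: wstar) - L w).
Proof.
move=> he hc.
rewrite (_ : w + eta *: V w - c *: wstar = (w - c *: wstar) + eta *: V w); last by rewrite addrAC.
rewrite dotv_sq (dotvZr eta (V w)) (dotvZl eta (V w)) (dotvZr eta (V w) (V w)) (dotvC _ (V w)).
set Q := dotv (w - c *: wstar) (w - c *: wstar).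
have -> : w - c *: wstar = (w - th *: wstar) - (eta / (2 * gamma)) *: wstar.
  by rewrite hc scalerDl opprD addrA.
rewrite dotvBr (dotvZr (eta / (2 * gamma)) wstar (V w)).
have h1 := Vconv w (th *: wstar).
have h2 := VV_le w.
have h3 := Gsq_le w.
have h4 := Vws w.
have hG0 := G_ge0 w.
set a := dotv (V w) (w - th *: wstar) in h1 *.
set b := dotv (V w) wstar in h4 *.
set vv := dotv (V w) (V w) in h2 *.
have k1 : eta * eta / 2 * G w <= eta * (eta / (2 * gamma) * b).
  have -> : eta * (eta / (2 * gamma) * b) = eta * eta / (2 * gamma) * b by rewrite !mulrA.
  have -> : eta * eta / 2 * G w = eta * eta / (2 * gamma) * (gamma * G w).
    by field; rewrite lt0r_neq0.
  by rewrite ler_wpM2l // mulr_ge0 ?invr_ge0 ?mulr_ge0 // ltW.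
have k2 : eta * (eta * vv) <= eta * eta * G w.
  rewrite mulrA ler_wpM2l ?mulr_ge0 ?(ltW he) //; lra.
have k3 : eta * a <= eta * (L (th *: wstar) - L w) by rewrite ler_wpM2l // ltW.
lra.
Qed.

Lemma gamma_le1 : gamma <= 1.
Proof.
pose i0 := Ordinal hn.
have h := cauchy_schwarz (x i0) wstar.
rewrite ws1 mulr1 in h.
have h1 := dxx i0.
have h2 := hmar i0.
have : (y i0 * dotv (x i0) wstar) ^+ 2 <= 1.
  by rewrite exprMn y_sq mul1r; apply: le_trans h h1.
have := hg; nra.
Qed.

Section Eta.
Variable eta : R.
Hypothesis he : 0 < eta.
Local Notation w := (gd x y eta).

Lemma sum1 th c t : c = th + eta / (2 * gamma) ->
  dotv (w t - c *: wstar) (w t - c *: wstar) + 2 * eta * \sum_(k < t) L (w k)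
  <= c ^+ 2 + 2 * eta * t%:R * L (th *: wstar).
Proof.
move=> hc; elim: t => [|t IH].
  rewrite big_ord0 gd0 sub0r dotvNl dotvNr opprK dotvZl dotvZr ws1; lra.
rewrite gdS big_ord_recr /=.
have := step1 (w t) eta th c he hc.
rewrite -[t.+1]addn1 natrD; lra.
Qed.

Lemma Xsum t : dotv (w t) wstar = eta * \sum_(k < t) dotv (V (w k)) wstar.
Proof.
elim: t => [|t IH]; first by rewrite big_ord0 gd0 dotv0l mulr0.
by rewrite big_ord_recr gdS dotvDl dotvZl IH mulrDr.
Qed.

Lemma stable s : eta * L (w s) <= 1 ->
  forall j, eta * L (w (s + j)) <= 1 /\ L (w (s + j).+1) <= L (w (s + j)).
Proof.
move=> h0; suff P : forall j, eta * L (w (s + j)) <= 1.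
  move=> j; split; first exact: P j.
  rewrite gdS; exact: descent (w (s + j)) eta he (P j).
elim=> [|j IH]; first by rewrite addn0.
have D := descent (w (s + j)) eta he IH.
rewrite addnS gdS; apply: (le_trans _ IH); rewrite ler_wpM2l ?(ltW he) //.
Qed.

Lemma mono s : eta * L (w s) <= 1 -> forall k j, L (w (s + (k + j))) <= L (w (s + k)).
Proof.
move=> h0 k; elim=> [|j IH]; first by rewrite addn0.
apply: (le_trans _ IH).
have [_ ] := stable s h0 (k + j); by rewrite !addnS.
Qed.

Lemma sum2 s u : eta * L (w s) <= 1 -> forall j,
  dotv (w (s + j) - u) (w (s + j) - u) + eta * \sum_(k < j) L (w (s + k))
  <= dotv (w s - u) (w s - u) + 2 * eta * j%:R * L u.
Proof.
move=> h0; elim=> [|j IH]; first by rewrite big_ord0 addn0; lra.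
rewrite addnS gdS big_ord_recr /=.
have [hL _] := stable s h0 j.
have := step2 (w (s + j)) eta u he hL.
rewrite -[j.+1]addn1 natrD; lra.
Qed.

Lemma sum_L_ge0 (f : nat -> 'rV[R]_d) t : 0 <= \sum_(k < t) L (f k).
Proof. by apply: sumr_ge0 => k _; apply: L_ge0. Qed.

Lemma sq_split (l e : R) : (l + e / 2) ^+ 2 / 2 <= l ^+ 2 + e ^+ 2 / 4.
Proof. have := sqr_ge0 (l - e / 2); nra. Qed.

Lemma part1 t : (1 <= t)%N ->
  t%:R^-1 * \sum_(k < t) L (w k) <=
  (1 + ln (gamma ^+ 2 * eta * t%:R) ^+ 2 + eta ^+ 2 / 4) / (gamma ^+ 2 * eta * t%:R).
Proof.
move=> ht.
set a := gamma ^+ 2 * eta * t%:R.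
set S := \sum_(k < t) L (w k).
have tpos : 0 < t%:R :> R by rewrite ltr0n.
have g2pos : 0 < gamma ^+ 2 by rewrite exprn_gt0.
have apos : 0 < a by rewrite /a !mulr_gt0.
have S0 : 0 <= S by apply: sum_L_ge0.
have key : S * (gamma ^+ 2 * eta) <= 1 + ln a ^+ 2 + eta ^+ 2 / 4.
  have [ha|ha] := lerP 1 a.
  - set th := ln a / gamma.
    have th0 : 0 <= th by rewrite /th divr_ge0 ?ln_ge0 // ltW.
    have h := sum1 th (th + eta / (2 * gamma)) t erefl.
    rewrite -/S in h.
    have hQ := dotv_ge0 (w t - (th + eta / (2 * gamma)) *: wstar).
    have hL := L_theta th th0.
    have e1 : th * gamma = ln a by rewrite /th mulfVK // lt0r_neq0.
    rewrite e1 expRN lnK ?posrE // in hL.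
    set Lt := L (th *: wstar) in h hL.
    have e2 : (th + eta / (2 * gamma)) ^+ 2 * gamma ^+ 2 = (ln a + eta / 2) ^+ 2.
      by rewrite /th; field; rewrite lt0r_neq0.
    have h3 : 2 * eta * S <= (th + eta / (2 * gamma)) ^+ 2 + 2 * eta * t%:R * Lt by lra.
    have h4 : gamma ^+ 2 * (2 * eta * S) <= gamma ^+ 2 * ((th + eta / (2 * gamma)) ^+ 2 + 2 * eta * t%:R * Lt).
      by rewrite ler_wpM2l // ltW.
    have h5 : gamma ^+ 2 * (2 * eta * t%:R) * Lt <= 2.
      have -> : gamma ^+ 2 * (2 * eta * t%:R) = 2 * a by rewrite /a; ring.
      have hh : 2 * a * Lt <= 2 * a * a^-1 by rewrite ler_wpM2l // mulr_ge0 // ltW.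
      by apply: (le_trans hh); rewrite -mulrA mulfV ?lt0r_neq0 // mulr1.
    have h6 := sq_split (ln a) eta.
    have e3 : gamma ^+ 2 * ((th + eta / (2 * gamma)) ^+ 2 + 2 * eta * t%:R * Lt) =
       (ln a + eta / 2) ^+ 2 + gamma ^+ 2 * (2 * eta * t%:R) * Lt.
      by rewrite -e2; ring.
    rewrite e3 in h4.
    have e4 : gamma ^+ 2 * (2 * eta * S) = 2 * (S * (gamma ^+ 2 * eta)) by ring.
    rewrite e4 in h4.
    lra.
  - have h := sum1 0 (0 + eta / (2 * gamma)) t erefl.
    have hQ := dotv_ge0 (w t - (0 + eta / (2 * gamma)) *: wstar).
    have hL := L_theta 0 (lexx 0).
    rewrite mul0r oppr0 expR0 in hL.
    set Lt := L (0 *: wstar) in h hL.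
    rewrite -/S in h.
    have h3 : 2 * eta * S <= (0 + eta / (2 * gamma)) ^+ 2 + 2 * eta * t%:R * Lt by lra.
    have h4 : gamma ^+ 2 * (2 * eta * S) <= gamma ^+ 2 * ((0 + eta / (2 * gamma)) ^+ 2 + 2 * eta * t%:R * Lt).
      by rewrite ler_wpM2l // ltW.
    have e3 : gamma ^+ 2 * ((0 + eta / (2 * gamma)) ^+ 2 + 2 * eta * t%:R * Lt) =
       eta ^+ 2 / 4 + 2 * a * Lt.
      by rewrite /a; field; rewrite lt0r_neq0.
    have h5 : 2 * a * Lt <= 2 * a by rewrite -[X in _ <= X]mulr1 ler_wpM2l // mulr_ge0 // ltW.
    have e4 : gamma ^+ 2 * (2 * eta * S) = 2 * (S * (gamma ^+ 2 * eta)) by ring.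
    rewrite e3 e4 in h4.
    have := sqr_ge0 (ln a); have := sqr_ge0 eta.
    lra.
rewrite ler_pdivlMr //.
have -> : t%:R^-1 * S * a = S * (gamma ^+ 2 * eta).
  by rewrite /a; field; rewrite lt0r_neq0.
exact: key.
Qed.

Lemma part2 s : L (w s) <= eta^-1 ->
  (forall t, (s <= t)%N -> L (w t.+1) <= L (w t)) /\
  (forall t, (s < t)%N ->
     L (w t) <= (2 * F (w s) + ln (gamma ^+ 2 * eta * (t - s)%:R) ^+ 2)
                / (gamma ^+ 2 * eta * (t - s)%:R)).
Proof.
move=> hs.
have h0 : eta * L (w s) <= 1.
  by rewrite -(mulfV (lt0r_neq0 he)) ler_wpM2l // ltW.
split.
  move=> t hst; have [_ H] := stable s h0 (t - s); by rewrite subnKC in H.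
move=> t hst.
have -> : t = (s + (t - s))%N by rewrite subnKC // ltnW.
rewrite addKn.
set j := (t - s)%N.
have hj : (0 < j)%N by rewrite subn_gt0.
set a := gamma ^+ 2 * eta * j%:R.
have jpos : 0 < j%:R :> R by rewrite ltr0n.
have g2pos : 0 < gamma ^+ 2 by rewrite exprn_gt0.
have apos : 0 < a by rewrite /a !mulr_gt0.
have Lt0 := L_ge0 (w (s + j)).
have Fs := L_le_F (w s).
have Ls0 := L_ge0 (w s).
rewrite ler_pdivlMr //.
have [ha|ha] := lerP 1 a; last first.
  have m0 := mono s h0 0 j; rewrite add0n addn0 in m0.
  have : L (w (s + j)) * a <= L (w (s + j)).
    by rewrite -[X in _ <= X]mulr1 ler_wpM2l // ltW.
  have := sqr_ge0 (ln a); lra.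
set th := ln a / gamma.
have th0 : 0 <= th by rewrite /th divr_ge0 ?ln_ge0 // ltW.
set u := w s + th *: wstar.
have h := sum2 s u h0 j.
have e0 : dotv (w s - u) (w s - u) = th ^+ 2.
  by rewrite /u opprD addrA addrN sub0r dotvNl dotvNr opprK dotvZl dotvZr ws1; ring.
rewrite e0 in h.
have hQ := dotv_ge0 (w (s + j) - u).
have hLu := L_shift (w s) th th0.
have e1 : th * gamma = ln a by rewrite /th mulfVK // lt0r_neq0.
rewrite e1 expRN lnK ?posrE // in hLu.
have hsum : j%:R * L (w (s + j)) <= \sum_(k < j) L (w (s + k)).
  have -> : j%:R * L (w (s + j)) = \sum_(k < j) L (w (s + j)) by rewrite sumr_const card_ord mulr_natl.
  apply: ler_sum => k _.
  have := mono s h0 k (j - k); rewrite subnKC //; exact: ltnW.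
set Lt := L (w (s + j)) in hsum Lt0 *.
set Fw := F (w s) in hLu Fs *.
have h1 : eta * (j%:R * Lt) <= th ^+ 2 + 2 * eta * j%:R * L u.
  have : eta * (j%:R * Lt) <= eta * \sum_(k < j) L (w (s + k)) by rewrite ler_wpM2l // ltW.
  lra.
have h2 : 2 * eta * j%:R * L u <= 2 * eta * j%:R * (a^-1 * Fw).
  have pos : 0 <= 2 * eta * j%:R by rewrite !mulr_ge0 // ltW.
  by rewrite ler_wpM2l.
have h3 : gamma ^+ 2 * (eta * (j%:R * Lt)) <= gamma ^+ 2 * (th ^+ 2 + 2 * eta * j%:R * (a^-1 * Fw)).
  apply: (ler_wpM2l (ltW g2pos)); lra.
have e2 : gamma ^+ 2 * (th ^+ 2 + 2 * eta * j%:R * (a^-1 * Fw)) = ln a ^+ 2 + 2 * Fw.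
  rewrite /th /a; field; rewrite !lt0r_neq0 // !mulr_gt0 //.
have e3 : gamma ^+ 2 * (eta * (j%:R * Lt)) = Lt * a by rewrite /a; ring.
rewrite e2 e3 in h3; lra.
Qed.

Lemma G_small w0 : G w0 <= (2 * (eta + n%:R))^-1 -> L w0 <= eta^-1 /\ F w0 <= 1.
Proof.
move=> hG.
have hn' : 0 < n%:R :> R by rewrite ltr0n.
have Npos : 0 < eta + n%:R by apply: addr_gt0.
have hGn : n%:R * G w0 <= 2^-1.
  apply: (le_trans (y := n%:R * (2 * (eta + n%:R))^-1)).
    by rewrite ler_pM2l.
  rewrite ler_pdivrMr ?mulr_gt0 // mulrA mulVf ?pnatr_eq0 // mul1r; have := he; lra.
have hpr : forall i, pr (m w0 i) <= 2^-1.
  move=> i; apply: le_trans hGn.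
  rewrite /G mulrA mulfV ?lt0r_neq0 // mul1r (bigD1 i) //=.
  have : 0 <= \sum_(j < n | j != i) pr (m w0 j) by apply: sumr_ge0 => j _; apply: pr_ge0'.
  lra.
have hm : forall i, 0 <= m w0 i by move=> i; apply: pr_half; apply: hpr.
split.
  have h2 : L w0 <= 2 * G w0.
    rewrite LE /G mulrCA ler_pM2l ?ninv_gt0 // mulr_sumr; apply: ler_sum => i _.
    exact: ell_le_2pr (hm i).
  apply: (le_trans h2).
  have h3 : 2 * G w0 <= (eta + n%:R)^-1.
    have : 2 * G w0 <= 2 * (2 * (eta + n%:R))^-1 by rewrite ler_pM2l.
    move=> hh; apply: (le_trans hh); rewrite invfM mulrA mulfV ?mul1r //.
  apply: (le_trans h3); rewrite lef_pV2 ?posrE //; lra.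
rewrite /exp_loss.
apply: (le_trans (y := n%:R^-1 * \sum_(i < n) (1 : R))).
  rewrite ler_pM2l ?ninv_gt0 //; apply: ler_sum => i _.
  by rewrite expR_le1 oppr_le0 hm.
by rewrite sumr_const card_ord mulVf ?lt0r_neq0.
Qed.

Lemma part3 : exists s : nat,
  s%:R <= 60 / gamma ^+ 2 * Num.max (Num.max eta n%:R)
     (Num.max (expR 1) ((eta + n%:R) / eta * ln ((eta + n%:R) / eta))) /\
  L (w s) <= eta^-1 /\ F (w s) <= 1.
Proof.
set M := Num.max _ _.
set N := eta + n%:R.
have hnn : 0 <= n%:R :> R by rewrite ler0n.
have hM1 : eta <= M by rewrite /M !le_max lexx.
have hM2 : n%:R <= M by rewrite /M !le_max lexx ?orbT.
have hM3 : expR 1 <= M by rewrite /M !le_max lexx ?orbT.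
have hM4 : (eta + n%:R) / eta * ln ((eta + n%:R) / eta) <= M by rewrite /M !le_max lexx ?orbT.
have g1 := gamma_le1.
have g2pos : 0 < gamma ^+ 2 by rewrite exprn_gt0.
have g2le1 : gamma ^+ 2 <= 1 by rewrite expr_le1 // ltW.
have e94 : 9 / 4 <= expR 1 :> R by apply: e_ge.
have Mpos : 0 < M by lra.
set tau := 60 / gamma ^+ 2 * M.
have tau_ge : 60 * M <= tau.
  rewrite /tau mulrAC ler_pdivlMr // -[X in _ <= X]mulr1 ler_wpM2l //; lra.
have tau0 : 0 <= tau by lra.
set t := Num.truncn tau.
have ht1 : t%:R <= tau by rewrite /t truncn_le.
have ht2 : tau < t%:R + 1.
  by have := truncnS_gt tau; rewrite -/t -[t.+1]addn1 natrD.
have tpos : 0 < t%:R :> R by lra.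
set A := gamma ^+ 2 * eta * t%:R.
have hA : 30 * eta * M <= A.
  have : tau / 2 <= t%:R by lra.
  move=> htt.
  have : gamma ^+ 2 * eta * (tau / 2) <= A by rewrite /A ler_pM2l // mulr_gt0.
  have -> : gamma ^+ 2 * eta * (tau / 2) = 30 * eta * M.
    by rewrite /tau; field; rewrite lt0r_neq0.
  by [].
have key := num3 he hnn hM1 hM2 hM3 hM4 hA.
rewrite -/N in key.
have Npos : 0 < N by rewrite /N; apply: addr_gt0 => //; rewrite ltr0n.
have Apos : 0 < A by have := mulr_gt0 (mulr_gt0 (ltr0n R 30) he) Mpos; lra.
set z := 16 * N ^+ 2 / A.
have z0 : 0 <= z by rewrite /z divr_ge0 ?mulr_ge0 ?sqr_ge0 // ltW.
set phi := ln (1 + z).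
have phi0 : 0 <= phi by rewrite /phi ln_ge0 //; lra.
set th := phi / gamma.
have th0 : 0 <= th by rewrite /th divr_ge0 // ltW.
set c := th + eta / (2 * gamma).
have h := sum1 th c t erefl.
have hS := sum_L_ge0 w t.
have hLt := L_theta th th0.
have e1 : th * gamma = phi by rewrite /th mulfVK // lt0r_neq0.
rewrite e1 expRN lnK ?posrE in hLt; last lra.
set E := (1 + z)^-1 in hLt.
set Q := dotv (w t - c *: wstar) (w t - c *: wstar) in h.
have cs := cauchy_schwarz (w t - c *: wstar) wstar.
rewrite ws1 mulr1 dotvBl dotvZl ws1 mulr1 -/Q in cs.
set X := dotv (w t) wstar in cs.
have hQ : Q <= c ^+ 2 + 2 * eta * t%:R * E.
  have : 2 * eta * t%:R * L (th *: wstar) <= 2 * eta * t%:R * E.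
    by rewrite ler_pM2l // !mulr_gt0.
  have := mulr_ge0 (ltW he) hS; lra.
have hall_or : [exists k : 'I_t, G (w k) <= (2 * N)^-1] \/
               forall k : 'I_t, (2 * N)^-1 <= G (w k).
  case: (boolP [exists k : 'I_t, G (w k) <= (2 * N)^-1]) => hex; first by left.
  right => k; move: hex; rewrite negb_exists => /forallP /(_ k).
  by rewrite -ltNge => /ltW.
case: hall_or => [/existsP [k hk] | hall].
  exists k; split.
    apply: le_trans ht1; rewrite ler_nat; exact: ltnW (ltn_ord k).
  exact: G_small hk.
exfalso.
set T0 := (2 * N)^-1.
have T0pos : 0 < T0 by rewrite /T0 invr_gt0 mulr_gt0.
have hX : eta * gamma * (t%:R * T0) <= X.
  have sumc : t%:R * T0 = \sum_(k < t) T0 by rewrite sumr_const card_ord mulr_natl.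
  rewrite /X Xsum -mulrA ler_pM2l // sumc.
  rewrite mulr_sumr; apply: ler_sum => k _.
  apply: le_trans (Vws (w k)); rewrite ler_pM2l //; exact: hall k.
set Y := gamma * X.
set C := phi + eta / 2.
set P := A * T0.
set B := 2 * A * E.
have hY : P <= Y.
  have hh := ler_wpM2l (ltW hg) hX.
  have -> : P = gamma * (eta * gamma * (t%:R * T0)) by rewrite /P /A; ring.
  exact: hh.
have eC : gamma * c = C by rewrite /c /C /th; field; rewrite lt0r_neq0.
have hYC : (Y - C) ^+ 2 <= C ^+ 2 + B.
  have e2 : (Y - C) ^+ 2 = gamma ^+ 2 * (X - c) ^+ 2 by rewrite /Y -eC; ring.
  have e3 : gamma ^+ 2 * (c ^+ 2 + 2 * eta * t%:R * E) = C ^+ 2 + B.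
    by rewrite -eC /B /A; ring.
  rewrite e2 -e3 ler_pM2l //; lra.
have hPC : 4 * C <= P.
  have e4 : 4 * C = (8 * N * phi + 4 * N * eta) * T0.
    by rewrite /C /T0; field; rewrite lt0r_neq0.
  by rewrite e4 /P ler_pM2r.
have hPB : 2 * B < P ^+ 2.
  have e5 : P ^+ 2 - 2 * B = A ^+ 3 / (4 * N ^+ 2 * (A + 16 * N ^+ 2)).
    rewrite /P /B /E /T0 /z; field.
    have N2 : 0 < 16 * N ^+ 2 by rewrite mulr_gt0 ?exprn_gt0.
    have nn0 : 0 < n%:R :> R by rewrite ltr0n.
    by repeat (apply/andP; split); apply: lt0r_neq0; rewrite ?mulr_gt0 ?exprn_gt0 ?addr_gt0 //.
  have : 0 < A ^+ 3 / (4 * N ^+ 2 * (A + 16 * N ^+ 2)).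
    have a3 : 0 < A ^+ 3 by apply: exprn_gt0.
    have n4 : 0 < 4 * N ^+ 2 by apply: mulr_gt0 => //; apply: exprn_gt0.
    have n16 : 0 < 16 * N ^+ 2 by apply: mulr_gt0 => //; apply: exprn_gt0.
    have an : 0 < A + 16 * N ^+ 2 by apply: addr_gt0.
    by apply: divr_gt0 => //; apply: mulr_gt0.
  lra.
have C0 : 0 <= C by rewrite /C addr_ge0 // divr_ge0 // ltW.
have p1 : 0 <= (Y - P) * (Y + P - 2 * C) by rewrite mulr_ge0 //; lra.
have p2 : 0 <= (P / 4 - C) * P by rewrite mulr_ge0 //; lra.
nra.
Qed.

End Eta.
End Log.


Theorem theorem1 (R : realType) (d n : nat)
    (x : 'I_n -> 'rV[R]_d) (y : 'I_n -> R) (gamma eta : R) (wstar : 'rV[R]_d) :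
  (0 < n)%N ->
  (forall i, y i = 1 \/ y i = -1) ->
  (forall i, norm2 (x i) <= 1) ->
  0 < gamma ->
  norm2 wstar = 1 ->
  (forall i, gamma <= y i * dotv (x i) wstar) ->
  0 < eta ->
  let L := logistic_loss x y in
  let F := exp_loss x y in
  let w := gd x y eta in
  (* (1) *)
  (forall t : nat, (1 <= t)%N ->
     t%:R^-1 * \sum_(k < t) L (w k)
       <= (1 + (ln (gamma ^+ 2 * eta * t%:R)) ^+ 2 + eta ^+ 2 / 4)
          / (gamma ^+ 2 * eta * t%:R)) /\
  (* (2) *)
  (forall s : nat, L (w s) <= eta^-1 ->
     (forall t : nat, (s <= t)%N -> L (w t.+1) <= L (w t)) /\
     (forall t : nat, (s < t)%N ->
        L (w t) <= (2 * F (w s) + (ln (gamma ^+ 2 * eta * (t - s)%:R)) ^+ 2)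
                   / (gamma ^+ 2 * eta * (t - s)%:R))) /\
  (* (3) *)
  (let tau := 60 / gamma ^+ 2 *
       Num.max (Num.max eta n%:R)
         (Num.max (expR 1) ((eta + n%:R) / eta * ln ((eta + n%:R) / eta))) in
   exists s : nat, s%:R <= tau /\ L (w s) <= eta^-1 /\ F (w s) <= 1).
Proof.
move=> hn hy hx hg hws hmar he L F w.
split; first by move=> t ht; exact: (part1 _ _ _ x y hn hy hx _ _ hg hws hmar _ he _ ht).
split; first by move=> s hs; exact: (part2 _ _ _ x y hn hy hx _ _ hg hws hmar _ he _ hs).
exact: (part3 _ _ _ x y hn hy hx _ _ hg hws hmar _ he).
Qed.
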